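(* For every $k\in\mathbb N$ and every pair of Batanin trees $B,B'$ with $\partial_kB=\partial_kB'$, there exist morphisms of globular sets $\mathrm{inc}^-\colon\mathrm{Pos}(B)\to\mathrm{Pos}(B\ast_kB')$ and $\mathrm{inc}^+\colon\mathrm{Pos}(B')\to\mathrm{Pos}(B\ast_kB')$ such that the square \[ \begin{array}{ccc} \mathrm{Pos}(\partial_kB)=\mathrm{Pos}(\partial_kB') & \xrightarrow{\ s^{B'}_k\ } & \mathrm{Pos}(B')\\ \big\downarrow t^{B}_k & & \big\downarrow \mathrm{inc}^+\\ \mathrm{Pos}(B) & \xrightarrow{\ \mathrm{inc}^-\ } & \mathrm{Pos}(B\ast_kB') \end{array} \] commutes and is a pushout square in the category of globular sets.
   Context: Batanin trees are generated inductively: for every finite list $B_1,\dots,B_n$ ($n\ge0$) of Batanin trees there is a tree $[B_1,\dots,B_n]$. The suspension $\Sigma Y$ of a globular set $Y$ has $0$-cells $v_-,v_+$ and $(\Sigma Y)_{n+1}=Y_n$, every $1$-cell having source $v_-$ and target $v_+$. The globular set of positions is $\mathrm{Pos}([B_1,\dots,B_n])=\Sigma\mathrm{Pos}(B_1)\vee\cdots\vee\Sigma\mathrm{Pos}(B_n)$, the iterated wedge sum (pushout) gluing $v_+$ of each summand to $v_-$ of the next (a single $0$-cell when $n=0$); $\mathrm{inc}_i$ is the inclusion of the $i$-th summand. Boundary: $\partial_0B=[\,]$, $\partial_{k+1}[B_1,\dots,B_n]=[\partial_kB_1,\dots,\partial_kB_n]$. Cosource/cotarget $s^B_k,t^B_k\colon\mathrm{Pos}(\partial_kB)\to\mathrm{Pos}(B)$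 for $B=[B_1,\dots,B_n]$: $s^B_0$ picks $\mathrm{inc}_1(v_-)$, $t^B_0$ picks $\mathrm{inc}_n(v_+)$ (the unique $0$-position if $n=0$), $s^B_{k+1}=\bigvee_i\Sigma s^{B_i}_k$, $t^B_{k+1}=\bigvee_i\Sigma t^{B_i}_k$. Composition of trees sharing a $k$-boundary: $[B_1,\dots,B_n]\ast_0[B'_1,\dots,B'_m]=[B_1,\dots,B_n,B'_1,\dots,B'_m]$ and $[B_1,\dots,B_n]\ast_{k+1}[B'_1,\dots,B'_n]=[B_1\ast_kB'_1,\dots,B_n\ast_kB'_n]$. *)

(* Defs.v *)
From Stdlib Require Import List.
Import ListNotations.

Record gset : Type := GSet {
  cell : nat -> Type;
  src : forall n, cell (S n) -> cell n;
  tgt : forall n, cell (S n) -> cell n;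
  glob_src : forall n (x : cell (S (S n))), src n (src (S n) x) = src n (tgt (S n) x);
  glob_tgt : forall n (x : cell (S (S n))), tgt n (src (S n) x) = tgt n (tgt (S n) x)
}.

Record ghom (X Y : gset) : Type := GHom {
  hmap :> forall n, cell X n -> cell Y n;
  hmap_src : forall n (x : cell X (S n)), hmap n (src X n x) = src Y n (hmap (S n) x);
  hmap_tgt : forall n (x : cell X (S n)), hmap n (tgt X n x) = tgt Y n (hmap (S n) x)
}.
Arguments hmap {X Y} _ _ _.

Definition is_pushout {A X Y P : gset}
  (f : forall n, cell A n -> cell X n) (g : forall n, cell A n -> cell Y n)
  (i : ghom X P) (j : ghom Y P) : Prop :=
  (forall n (a : cell A n), hmap i n (f n a) = hmap j n (g n a)) /\
  forall (Z : gset) (u : ghom X Z) (v : ghom Y Z),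
    (forall n (a : cell A n), hmap u n (f n a) = hmap v n (g n a)) ->
    exists w : ghom P Z,
      (forall n (x : cell X n), hmap w n (hmap i n x) = hmap u n x) /\
      (forall n (y : cell Y n), hmap w n (hmap j n y) = hmap v n y) /\
      (forall w' : ghom P Z,
         (forall n (x : cell X n), hmap w' n (hmap i n x) = hmap u n x) ->
         (forall n (y : cell Y n), hmap w' n (hmap j n y) = hmap v n y) ->
         forall n (p : cell P n), hmap w' n p = hmap w n p).

Inductive tree : Type := Node : list tree -> tree.

Definition tree_ind' (P : tree -> Prop)
  (H : forall l, Forall P l -> P (Node l)) : forall t, P t :=
  fix F t := match t with
  | Node l => H l ((fix G l : Forall P l :=
                      match l with
                      | [] => Forall_nil P
                      | b :: l' => Forall_cons b (F b) (G l')
                      end) l)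
  end.

Fixpoint bd (k : nat) (B : tree) : tree :=
  match k with
  | 0 => Node []
  | S k' => match B with Node l => Node (map (bd k') l) end
  end.

Fixpoint comp (k : nat) (B B' : tree) : tree :=
  match k with
  | 0 => match B, B' with Node l, Node l' => Node (l ++ l') end
  | S k' => match B, B' with
            | Node l, Node l' =>
                Node ((fix go (l l' : list tree) : list tree :=
                         match l, l' with
                         | b :: r, b' :: r' => comp k' b b' :: go r r'
                         | _, _ => []
                         end) l l')
            end
  end.

(** * Positions: Pos([B_1..B_n]) = ΣPos(B_1) ∨ ... ∨ ΣPos(B_n)
    Concrete model of the iterated wedge of suspensions:
    - 0-cells: the n+1 glued endpoints v_0,...,v_n ([vert l]), where the
      summand ΣPos(B_i) has v_- = v_{i-1} and v_+ = v_i;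
    - (m+1)-cells: the disjoint union of the m-cells of Pos(B_1),...,Pos(B_n)
      ([lsum]), i.e. of the (m+1)-cells of the summands ΣPos(B_i). *)
Fixpoint vert (l : list tree) : Type :=
  match l with
  | [] => unit
  | _ :: l' => (unit + vert l')%type
  end.

Definition vfirst (l : list tree) : vert l :=
  match l return vert l with
  | [] => tt
  | _ :: _ => inl tt
  end.

Fixpoint vlast (l : list tree) : vert l :=
  match l return vert l with
  | [] => tt
  | _ :: l' => inr (vlast l')
  end.

Fixpoint lsum (F : tree -> Type) (l : list tree) : Type :=
  match l with
  | [] => Empty_set
  | b :: l' => (F b + lsum F l')%type
  end.

Fixpoint posc (t : tree) (n : nat) {struct t} : Type :=
  match t with
  | Node l => match n with
              | 0 => vert l
              | S m => lsum (fun b => posc b m) l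
              end
  end.

(* source / target of a 1-cell of the i-th summand: v_{i-1} / v_i *)
Fixpoint lsum_src {F} (l : list tree) : lsum F l -> vert l :=
  match l return lsum F l -> vert l with
  | [] => fun x => match x with end
  | _ :: l' => fun x => match x with
                        | inl _ => inl tt
                        | inr y => inr (lsum_src l' y)
                        end
  end.

Fixpoint lsum_tgt {F} (l : list tree) : lsum F l -> vert l :=
  match l return lsum F l -> vert l with
  | [] => fun x => match x with end
  | _ :: l' => fun x => match x with
                        | inl _ => inr (vfirst l')
                        | inr y => inr (lsum_tgt l' y)
                        end
  end.

Fixpoint lsum_map {F G : tree -> Type} (h : forall b, F b -> G b) (l : list tree)
  : lsum F l -> lsum G l :=
  match l return lsum F l -> lsum G l with
  | [] => fun x => x
  | b :: l' => fun x => match x with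
                        | inl y => inl (h b y)
                        | inr y => inr (lsum_map h l' y)
                        end
  end.

Fixpoint psrc (t : tree) (n : nat) {struct t} : posc t (S n) -> posc t n :=
  match t return posc t (S n) -> posc t n with
  | Node l => match n return posc (Node l) (S n) -> posc (Node l) n with
              | 0 => lsum_src l
              | S m => lsum_map (fun b => psrc b m) l
              end
  end.

Fixpoint ptgt (t : tree) (n : nat) {struct t} : posc t (S n) -> posc t n :=
  match t return posc t (S n) -> posc t n with
  | Node l => match n return posc (Node l) (S n) -> posc (Node l) n with
              | 0 => lsum_tgt l
              | S m => lsum_map (fun b => ptgt b m) l
              end
  end.

Lemma lsum_src_map {F G} (h : forall b, F b -> G b) l (x : lsum F l) :
  lsum_src l (lsum_map h l x) = lsum_src l x.
Proof. induction l as [|b l IH]; [destruct x|destruct x; simpl; congruence]. Qed.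

Lemma lsum_tgt_map {F G} (h : forall b, F b -> G b) l (x : lsum F l) :
  lsum_tgt l (lsum_map h l x) = lsum_tgt l x.
Proof. induction l as [|b l IH]; [destruct x|destruct x; simpl; congruence]. Qed.

Lemma lsum_map_ext2 {F G H : tree -> Type} (h1 h2 : forall b, G b -> H b)
  (g1 g2 : forall b, F b -> G b) l :
  Forall (fun b => forall y, h1 b (g1 b y) = h2 b (g2 b y)) l ->
  forall x : lsum F l, lsum_map h1 l (lsum_map g1 l x) = lsum_map h2 l (lsum_map g2 l x).
Proof.
  induction 1 as [|b l Hb Hl IH]; intros x; [destruct x|].
  destruct x as [y|y]; simpl; [rewrite Hb|rewrite IH]; reflexivity.
Qed.

Lemma pos_glob : forall t n (x : posc t (S (S n))),
  psrc t n (psrc t (S n) x) = psrc t n (ptgt t (S n) x) /\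
  ptgt t n (psrc t (S n) x) = ptgt t n (ptgt t (S n) x).
Proof.
  refine (tree_ind' _ _). intros l IH n x. destruct n as [|m]; simpl.
  - rewrite !lsum_src_map, !lsum_tgt_map. split; reflexivity.
  - split; apply lsum_map_ext2;
      refine (Forall_impl _ _ IH); intros b Hb y; apply Hb.
Qed.

Definition Pos (t : tree) : gset :=
  {| cell := posc t; src := psrc t; tgt := ptgt t;
     glob_src := fun n x => proj1 (pos_glob t n x);
     glob_tgt := fun n x => proj2 (pos_glob t n x) |}.

Fixpoint vert_of_map (f : tree -> tree) (l : list tree) : vert (map f l) -> vert l :=
  match l return vert (map f l) -> vert l with
  | [] => fun x => x
  | _ :: l' => fun x => match x with
                        | inl u => inl u
                        | inr y => inr (vert_of_map f l' y)
                        end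
  end.

Fixpoint lsum_of_map {F G : tree -> Type} (f : tree -> tree)
  (h : forall b, F (f b) -> G b) (l : list tree) : lsum F (map f l) -> lsum G l :=
  match l return lsum F (map f l) -> lsum G l with
  | [] => fun x => x
  | b :: l' => fun x => match x with
                        | inl y => inl (h b y)
                        | inr y => inr (lsum_of_map f h l' y)
                        end
  end.

(* [first] = true: cosource s (picks inc_1(v_-)); false: cotarget t (inc_n(v_+)) *)
Fixpoint cobd (first : bool) (k : nat) (B : tree) (n : nat) {struct k}
  : posc (bd k B) n -> posc B n :=
  match k return posc (bd k B) n -> posc B n with
  | 0 => match B return posc (bd 0 B) n -> posc B n with
         | Node l => match n return posc (Node []) n -> posc (Node l) n with
                     | 0 => fun _ => if first then vfirst l else vlast l
                     | S m => fun x => match x with end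
                     end
         end
  | S k' => match B return posc (bd (S k') B) n -> posc B n with
            | Node l => match n return posc (Node (map (bd k') l)) n -> posc (Node l) n with
                        | 0 => vert_of_map (bd k') l
                        | S m => lsum_of_map (bd k') (fun b => cobd first k' b m) l
                        end
            end
  end.

Definition cosrc (k : nat) (B : tree) : forall n, cell (Pos (bd k B)) n -> cell (Pos B) n :=
  cobd true k B.
Definition cotgt (k : nat) (B : tree) : forall n, cell (Pos (bd k B)) n -> cell (Pos B) n :=
  cobd false k B.

Definition pos_cast {A A' : tree} (e : A = A') : forall n, cell (Pos A) n -> cell (Pos A') n :=
  fun n x => eq_rect A (fun t => posc t n) x A' e.

(* Main.v *)
Require Import Defs.
From Stdlib Require Import List ProofIrrelevance ClassicalEpsilon.
Import ListNotations.

Definition zipc (k : nat) : list tree -> list tree -> list tree :=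
  fix go (l l' : list tree) : list tree :=
    match l, l' with
    | b :: r, b' :: r' => comp k b b' :: go r r'
    | _, _ => []
    end.

Lemma comp_S k l l' : comp (S k) (Node l) (Node l') = Node (zipc k l l').
Proof. reflexivity. Qed.

Definition nodes (t : tree) : list tree := match t with Node l => l end.

Fixpoint zvert (k : nat) (l l' : list tree) {struct l} : vert l -> vert (zipc k l l') :=
  match l as l0 return vert l0 -> vert (zipc k l0 l') with
  | [] => fun _ => tt
  | b :: r => match l' as l0' return vert (b :: r) -> vert (zipc k (b :: r) l0') with
              | [] => fun _ => tt
              | b' :: r' => fun x => match x with
                                     | inl u => inl u
                                     | inr y => inr (zvert k r r' y)
                                     end
              end
  end.

Fixpoint zvertp (k : nat) (l l' : list tree) {struct l} : vert l' -> vert (zipc k l l') :=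
  match l as l0 return vert l' -> vert (zipc k l0 l') with
  | [] => fun _ => tt
  | b :: r => match l' as l0' return vert l0' -> vert (zipc k (b :: r) l0') with
              | [] => fun _ => tt
              | b' :: r' => fun x => match x with
                                     | inl u => inl u
                                     | inr y => inr (zvertp k r r' y)
                                     end
              end
  end.

Definition cons_nil_absurd {A} (a : tree) (s : list tree) (e : a :: s = []) : A :=
  False_rect A (match e in _ = z return match z with [] => False | _ => True end with
                | eq_refl => I end).

Fixpoint zlsum (k : nat) (F G : tree -> Type)
  (h : forall b b', bd k b = bd k b' -> F b -> G (comp k b b'))
  (l l' : list tree) {struct l} :
  map (bd k) l = map (bd k) l' -> lsum F l -> lsum G (zipc k l l') :=
  match l as l0 return map (bd k) l0 = map (bd k) l' -> lsum F l0 -> lsum G (zipc k l0 l') with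
  | [] => fun _ x => match x with end
  | b :: r => match l' as l0' return map (bd k) (b :: r) = map (bd k) l0' -> lsum F (b :: r) -> lsum G (zipc k (b :: r) l0') with
              | [] => fun e _ => cons_nil_absurd _ _ e
              | b' :: r' => fun e x => match x with
                   | inl y => inl (h b b' (f_equal (hd (Node [])) e) y)
                   | inr y => inr (zlsum k F G h r r' (f_equal (@tl tree) e) y)
                   end
              end
  end.

Fixpoint zlsump (k : nat) (F G : tree -> Type)
  (h : forall b b', bd k b = bd k b' -> F b' -> G (comp k b b'))
  (l l' : list tree) {struct l} :
  map (bd k) l = map (bd k) l' -> lsum F l' -> lsum G (zipc k l l') :=
  match l as l0 return map (bd k) l0 = map (bd k) l' -> lsum F l' -> lsum G (zipc k l0 l') with
  | [] => match l' as l0' return map (bd k) [] = map (bd k) l0' -> lsum F l0' -> lsum G (zipc k [] l0') with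
          | [] => fun _ x => match x with end
          | c :: s => fun e _ => cons_nil_absurd _ _ (eq_sym e)
          end
  | b :: r => match l' as l0' return map (bd k) (b :: r) = map (bd k) l0' -> lsum F l0' -> lsum G (zipc k (b :: r) l0') with
              | [] => fun e _ => cons_nil_absurd _ _ e
              | b' :: r' => fun e x => match x with
                   | inl y => inl (h b b' (f_equal (hd (Node [])) e) y)
                   | inr y => inr (zlsump k F G h r r' (f_equal (@tl tree) e) y)
                   end
              end
  end.

Fixpoint vapp_l (l l' : list tree) : vert l -> vert (l ++ l') :=
  match l as l0 return vert l0 -> vert (l0 ++ l') with
  | [] => fun _ => vfirst l'
  | b :: r => fun x => match x with inl u => inl u | inr y => inr (vapp_l r l' y) end
  end.

Fixpoint vapp_r (l l' : list tree) : vert l' -> vert (l ++ l') :=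
  match l as l0 return vert l' -> vert (l0 ++ l') with
  | [] => fun y => y
  | b :: r => fun y => inr (vapp_r r l' y)
  end.

Fixpoint lapp_l {F : tree -> Type} (l l' : list tree) : lsum F l -> lsum F (l ++ l') :=
  match l as l0 return lsum F l0 -> lsum F (l0 ++ l') with
  | [] => fun x => match x with end
  | b :: r => fun x => match x with inl u => inl u | inr y => inr (lapp_l r l' y) end
  end.

Fixpoint lapp_r {F : tree -> Type} (l l' : list tree) : lsum F l' -> lsum F (l ++ l') :=
  match l as l0 return lsum F l' -> lsum F (l0 ++ l') with
  | [] => fun y => y
  | b :: r => fun y => inr (lapp_r r l' y)
  end.

Fixpoint incm (k : nat) : forall B B' : tree, bd k B = bd k B' -> forall n, posc B n -> posc (comp k B B') n :=
  match k as k0 return forall B B' : tree, bd k0 B = bd k0 B' -> forall n, posc B n -> posc (comp k0 B B') n with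
  | 0 => fun B B' _ => match B as B0, B' as B0' return forall n, posc B0 n -> posc (comp 0 B0 B0') n with
         | Node l, Node l' => fun n => match n as n0 return posc (Node l) n0 -> posc (Node (l ++ l')) n0 with
                              | 0 => vapp_l l l'
                              | S m => lapp_l l l'
                              end
         end
  | S k' => fun B B' => match B as B0, B' as B0' return bd (S k') B0 = bd (S k') B0' -> forall n, posc B0 n -> posc (comp (S k') B0 B0') n with
         | Node l, Node l' => fun e n => match n as n0 return posc (Node l) n0 -> posc (Node (zipc k' l l')) n0 with
                              | 0 => zvert k' l l'
                              | S m => zlsum k' (fun b => posc b m) (fun b => posc b m) (fun b b' eb => incm k' b b' eb m) l l' (f_equal nodes e)
                              end
         end
  end.

Fixpoint incp (k : nat) : forall B B' : tree, bd k B = bd k B' -> forall n, posc B' n -> posc (comp k B B') n :=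
  match k as k0 return forall B B' : tree, bd k0 B = bd k0 B' -> forall n, posc B' n -> posc (comp k0 B B') n with
  | 0 => fun B B' _ => match B as B0, B' as B0' return forall n, posc B0' n -> posc (comp 0 B0 B0') n with
         | Node l, Node l' => fun n => match n as n0 return posc (Node l') n0 -> posc (Node (l ++ l')) n0 with
                              | 0 => vapp_r l l'
                              | S m => lapp_r l l'
                              end
         end
  | S k' => fun B B' => match B as B0, B' as B0' return bd (S k') B0 = bd (S k') B0' -> forall n, posc B0' n -> posc (comp (S k') B0 B0') n with
         | Node l, Node l' => fun e n => match n as n0 return posc (Node l') n0 -> posc (Node (zipc k' l l')) n0 with
                              | 0 => zvertp k' l l'
                              | S m => zlsump k' (fun b => posc b m) (fun b => posc b m) (fun b b' eb => incp k' b b' eb m) l l' (f_equal nodes e)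
                              end
         end
  end.
Lemma pushout_crit {A X Y P : gset}
  (f : forall n, cell A n -> cell X n) (g : forall n, cell A n -> cell Y n)
  (i : ghom X P) (j : ghom Y P) :
  (forall n a, hmap i n (f n a) = hmap j n (g n a)) ->
  (forall n x x', hmap i n x = hmap i n x' -> x = x') ->
  (forall n y y', hmap j n y = hmap j n y' -> y = y') ->
  (forall n x y, hmap i n x = hmap j n y -> exists a, x = f n a /\ y = g n a) ->
  (forall n p, (exists x, hmap i n x = p) \/ (exists y, hmap j n y = p)) ->
  is_pushout f g i j.
Proof.
  intros H1 Hi Hj H3 H4. split; [exact H1|].
  intros Z u v Huv.
  assert (Ex : forall n p, exists z : cell Z n,
     (exists x, hmap i n x = p /\ hmap u n x = z) \/ (exists y, hmap j n y = p /\ hmap v n y = z)).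
  { intros n p. destruct (H4 n p) as [[x Hx]|[y Hy]].
    - exists (hmap u n x). left. eauto.
    - exists (hmap v n y). right. eauto. }
  set (w := fun n p => proj1_sig (constructive_indefinite_description _ (Ex n p))).
  assert (Wi : forall n x, w n (hmap i n x) = hmap u n x).
  { intros n x. unfold w. destruct (constructive_indefinite_description _ _) as [z [[x' [E1 E2]]|[y [E1 E2]]]]; simpl.
    - apply Hi in E1. subst. reflexivity.
    - symmetry in E1. destruct (H3 n x y E1) as [a [-> ->]]. rewrite <- E2. symmetry. apply Huv. }
  assert (Wj : forall n y, w n (hmap j n y) = hmap v n y).
  { intros n y. unfold w. destruct (constructive_indefinite_description _ _) as [z [[x [E1 E2]]|[y' [E1 E2]]]]; simpl.
    - destruct (H3 n x y E1) as [a [-> ->]]. rewrite <- E2. apply Huv.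
    - apply Hj in E1. subst. reflexivity. }
  assert (Ws : forall n p, w n (src P n p) = src Z n (w (S n) p)).
  { intros n p. destruct (H4 (S n) p) as [[x <-]|[y <-]].
    - rewrite <- hmap_src, !Wi. apply hmap_src.
    - rewrite <- hmap_src, !Wj. apply hmap_src. }
  assert (Wt : forall n p, w n (tgt P n p) = tgt Z n (w (S n) p)).
  { intros n p. destruct (H4 (S n) p) as [[x <-]|[y <-]].
    - rewrite <- hmap_tgt, !Wi. apply hmap_tgt.
    - rewrite <- hmap_tgt, !Wj. apply hmap_tgt. }
  exists (GHom P Z w Ws Wt). simpl. split; [exact Wi|]. split; [exact Wj|].
  intros w' W1 W2 n p. destruct (H4 n p) as [[x <-]|[y <-]].
  - rewrite W1, Wi. reflexivity.
  - rewrite W2, Wj. reflexivity.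
Qed.

Ltac cn e := first [exact (cons_nil_absurd _ _ e) | exact (cons_nil_absurd _ _ (eq_sym e))].

Section Compat.
Context {F G : tree -> Type}.

Lemma vfirst_app l l' : vapp_l l l' (vfirst l) = vfirst (l ++ l').
Proof. destruct l; reflexivity. Qed.

Lemma vapp_l_src l l' (x : lsum F l) : vapp_l l l' (lsum_src l x) = lsum_src (l ++ l') (lapp_l l l' x).
Proof. induction l as [|b r IH]; [destruct x|destruct x as [y|y]; simpl; [reflexivity|now rewrite IH]]. Qed.
Lemma vapp_l_tgt l l' (x : lsum F l) : vapp_l l l' (lsum_tgt l x) = lsum_tgt (l ++ l') (lapp_l l l' x).
Proof. induction l as [|b r IH]; [destruct x|destruct x as [y|y]; simpl; [now rewrite vfirst_app|now rewrite IH]]. Qed.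
Lemma vapp_r_src l l' (x : lsum F l') : vapp_r l l' (lsum_src l' x) = lsum_src (l ++ l') (lapp_r l l' x).
Proof. induction l as [|b r IH]; simpl; [reflexivity|now rewrite IH]. Qed.
Lemma vapp_r_tgt l l' (x : lsum F l') : vapp_r l l' (lsum_tgt l' x) = lsum_tgt (l ++ l') (lapp_r l l' x).
Proof. induction l as [|b r IH]; simpl; [reflexivity|now rewrite IH]. Qed.
Lemma lapp_l_map (h : forall b, F b -> G b) l l' (x : lsum F l) :
  lapp_l l l' (lsum_map h l x) = lsum_map h (l ++ l') (lapp_l l l' x).
Proof. induction l as [|b r IH]; [destruct x|destruct x as [y|y]; simpl; [reflexivity|now rewrite IH]]. Qed.
Lemma lapp_r_map (h : forall b, F b -> G b) l l' (x : lsum F l') :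
  lapp_r l l' (lsum_map h l' x) = lsum_map h (l ++ l') (lapp_r l l' x).
Proof. induction l as [|b r IH]; simpl; [reflexivity|now rewrite IH]. Qed.

Lemma zvert_vfirst k r r' : zvert k r r' (vfirst r) = vfirst (zipc k r r').
Proof. destruct r, r'; reflexivity. Qed.
Lemma zvertp_vfirst k r r' : zvertp k r r' (vfirst r') = vfirst (zipc k r r').
Proof. destruct r, r'; reflexivity. Qed.

Lemma zvert_src k h l l' e (x : lsum F l) :
  zvert k l l' (lsum_src l x) = lsum_src (zipc k l l') (zlsum k F G h l l' e x).
Proof.
  revert l' e x; induction l as [|b r IH]; intros [|b' r'] e x; try cn e; destruct x;
  simpl; try reflexivity; f_equal; apply IH.
Qed.
Lemma zvert_tgt k h l l' e (x : lsum F l) :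
  zvert k l l' (lsum_tgt l x) = lsum_tgt (zipc k l l') (zlsum k F G h l l' e x).
Proof.
  revert l' e x; induction l as [|b r IH]; intros [|b' r'] e x; try cn e; destruct x;
  simpl; try reflexivity; f_equal; first [apply IH | apply zvert_vfirst].
Qed.
Lemma zvertp_src k h l l' e (x : lsum F l') :
  zvertp k l l' (lsum_src l' x) = lsum_src (zipc k l l') (zlsump k F G h l l' e x).
Proof.
  revert l' e x; induction l as [|b r IH]; intros [|b' r'] e x; try cn e; destruct x;
  simpl; try reflexivity; f_equal; apply IH.
Qed.
Lemma zvertp_tgt k h l l' e (x : lsum F l') :
  zvertp k l l' (lsum_tgt l' x) = lsum_tgt (zipc k l l') (zlsump k F G h l l' e x).
Proof.
  revert l' e x; induction l as [|b r IH]; intros [|b' r'] e x; try cn e; destruct x;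
  simpl; try reflexivity; f_equal; first [apply IH | apply zvertp_vfirst].
Qed.
End Compat.

Lemma zlsum_map {F1 G1 F2 G2 : tree -> Type} k h1 h2 (p : forall b, F1 b -> F2 b) (p' : forall b, G1 b -> G2 b)
  (H : forall b b' eb y, h2 b b' eb (p b y) = p' (comp k b b') (h1 b b' eb y)) l l' e (x : lsum F1 l) :
  zlsum k F2 G2 h2 l l' e (lsum_map p l x) = lsum_map p' (zipc k l l') (zlsum k F1 G1 h1 l l' e x).
Proof.
  revert l' e x; induction l as [|b r IH]; intros [|b' r'] e x; try cn e; destruct x;
  simpl; try reflexivity; f_equal; first [apply IH | apply H].
Qed.
Lemma zlsump_map {F1 G1 F2 G2 : tree -> Type} k h1 h2 (p : forall b, F1 b -> F2 b) (p' : forall b, G1 b -> G2 b)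
  (H : forall b b' eb y, h2 b b' eb (p b' y) = p' (comp k b b') (h1 b b' eb y)) l l' e (x : lsum F1 l') :
  zlsump k F2 G2 h2 l l' e (lsum_map p l' x) = lsum_map p' (zipc k l l') (zlsump k F1 G1 h1 l l' e x).
Proof.
  revert l' e x; induction l as [|b r IH]; intros [|b' r'] e x; try cn e; destruct x;
  simpl; try reflexivity; f_equal; first [apply IH | apply H].
Qed.

Lemma incm_src k : forall B B' e n x,
  incm k B B' e n (psrc B n x) = psrc (comp k B B') n (incm k B B' e (S n) x).
Proof.
  induction k as [|k IH]; intros [l] [l'] e [|n] x.
  - exact (vapp_l_src (F := fun b => posc b 0) l l' x).
  - exact (lapp_l_map (fun b => psrc b n) l l' x).
  - exact (zvert_src k _ l l' (f_equal nodes e) x).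
  - exact (zlsum_map k _ _ (fun b => psrc b n) (fun b => psrc b n) (fun b b' eb y => IH b b' eb n y) l l' (f_equal nodes e) x).
Qed.
Lemma incm_tgt k : forall B B' e n x,
  incm k B B' e n (ptgt B n x) = ptgt (comp k B B') n (incm k B B' e (S n) x).
Proof.
  induction k as [|k IH]; intros [l] [l'] e [|n] x.
  - exact (vapp_l_tgt (F := fun b => posc b 0) l l' x).
  - exact (lapp_l_map (fun b => ptgt b n) l l' x).
  - exact (zvert_tgt k _ l l' (f_equal nodes e) x).
  - exact (zlsum_map k _ _ (fun b => ptgt b n) (fun b => ptgt b n) (fun b b' eb y => IH b b' eb n y) l l' (f_equal nodes e) x).
Qed.
Lemma incp_src k : forall B B' e n x,
  incp k B B' e n (psrc B' n x) = psrc (comp k B B') n (incp k B B' e (S n) x).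
Proof.
  induction k as [|k IH]; intros [l] [l'] e [|n] x.
  - exact (vapp_r_src (F := fun b => posc b 0) l l' x).
  - exact (lapp_r_map (fun b => psrc b n) l l' x).
  - exact (zvertp_src k _ l l' (f_equal nodes e) x).
  - exact (zlsump_map k _ _ (fun b => psrc b n) (fun b => psrc b n) (fun b b' eb y => IH b b' eb n y) l l' (f_equal nodes e) x).
Qed.
Lemma incp_tgt k : forall B B' e n x,
  incp k B B' e n (ptgt B' n x) = ptgt (comp k B B') n (incp k B B' e (S n) x).
Proof.
  induction k as [|k IH]; intros [l] [l'] e [|n] x.
  - exact (vapp_r_tgt (F := fun b => posc b 0) l l' x).
  - exact (lapp_r_map (fun b => ptgt b n) l l' x).
  - exact (zvertp_tgt k _ l l' (f_equal nodes e) x).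
  - exact (zlsump_map k _ _ (fun b => ptgt b n) (fun b => ptgt b n) (fun b b' eb y => IH b b' eb n y) l l' (f_equal nodes e) x).
Qed.

Lemma cast_gen c s c' s' (E : Node (c :: s) = Node (c' :: s')) (e1 : c = c') (e2 : Node s = Node s') :
  (forall m (y : posc c m), pos_cast E (S m) (inl y) = inl (pos_cast e1 m y)) /\
  (forall m (y : lsum (fun b => posc b m) s), pos_cast E (S m) (inr y) = inr (pos_cast e2 (S m) y)) /\
  (forall u, pos_cast E 0 (inl u) = inl u) /\
  (forall (y : vert s), pos_cast E 0 (inr y) = inr (pos_cast e2 0 y)).
Proof.
  injection E as H1 H2. subst c' s'.
  rewrite (proof_irrelevance _ E eq_refl), (proof_irrelevance _ e1 eq_refl), (proof_irrelevance _ e2 eq_refl).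
  repeat split; reflexivity.
Qed.

Lemma unit_all (u v : unit) : u = v.
Proof. destruct u, v; reflexivity. Qed.

Section Lists.
Variable k : nat.
Notation f := (bd k).

Lemma cast_S_inl b r b' r' (E : Node (map f (b :: r)) = Node (map f (b' :: r'))) (e1 : f b = f b') m (y : posc (f b) m) :
  pos_cast E (S m) (inl y) = inl (pos_cast e1 m y).
Proof. exact (proj1 (cast_gen _ _ _ _ E e1 (f_equal (fun l => Node (tl (nodes l))) E)) m y). Qed.
Lemma cast_S_inr b r b' r' (E : Node (map f (b :: r)) = Node (map f (b' :: r'))) (e2 : Node (map f r) = Node (map f r')) m (y : lsum (fun b => posc b m) (map f r)) :
  pos_cast E (S m) (inr y) = inr (pos_cast e2 (S m) y).
Proof. exact (proj1 (proj2 (cast_gen _ _ _ _ E (f_equal (fun l => hd (Node []) (nodes l)) E) e2)) m y). Qed.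
Lemma cast_0_inl b r b' r' (E : Node (map f (b :: r)) = Node (map f (b' :: r'))) u :
  pos_cast E 0 (inl u) = inl u.
Proof. exact (proj1 (proj2 (proj2 (cast_gen _ _ _ _ E (f_equal (fun l => hd (Node []) (nodes l)) E) (f_equal (fun l => Node (tl (nodes l))) E)))) u). Qed.
Lemma cast_0_inr b r b' r' (E : Node (map f (b :: r)) = Node (map f (b' :: r'))) (e2 : Node (map f r) = Node (map f r')) (y : vert (map f r)) :
  pos_cast E 0 (inr y) = inr (pos_cast e2 0 y).
Proof. exact (proj2 (proj2 (proj2 (cast_gen _ _ _ _ E (f_equal (fun l => hd (Node []) (nodes l)) E) e2))) y). Qed.

Ltac cnE E := let H := fresh in injection E as H; cn H.
Ltac tails E r r' := let e2 := fresh "e2" in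
  assert (e2 : Node (map f r) = Node (map f r')) by (injection E; intros; congruence).

Lemma P1_0 l : forall l' (E : Node (map f l) = Node (map f l')) (a : vert (map f l)),
  zvert k l l' (vert_of_map f l a) = zvertp k l l' (vert_of_map f l' (pos_cast E 0 a)).
Proof.
  induction l as [|b r IH]; intros [|b' r'] E a; try cnE E.
  - reflexivity.
  - destruct a as [u|a].
    + rewrite cast_0_inl. reflexivity.
    + tails E r r'. rewrite (cast_0_inr _ _ _ _ E e2). simpl. f_equal. apply IH.
Qed.

Section WithM.
Variable m : nat.
Notation Fm := (fun b => posc b m).

Lemma P1_S (h1 : forall b b', f b = f b' -> posc b m -> posc (comp k b b') m)
  (h2 : forall b b', f b = f b' -> posc b' m -> posc (comp k b b') m)
  (T1 S1 : forall b, posc (f b) m -> posc b m)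
  (H : forall b b' eb eb' a, h1 b b' eb (T1 b a) = h2 b b' eb (S1 b' (pos_cast eb' m a))) :
  forall l l' (E : Node (map f l) = Node (map f l')) el (a : lsum Fm (map f l)),
  zlsum k Fm Fm h1 l l' el (lsum_of_map f T1 l a) = zlsump k Fm Fm h2 l l' el (lsum_of_map f S1 l' (pos_cast E (S m) a)).
Proof.
  induction l as [|b r IH]; intros [|b' r'] E el a; try cnE E.
  - destruct a.
  - destruct a as [y|y].
    + assert (e1 : f b = f b') by (injection E; intros; congruence).
      rewrite (cast_S_inl _ _ _ _ E e1). simpl. f_equal. apply H.
    + tails E r r'. rewrite (cast_S_inr _ _ _ _ E e2). simpl. f_equal. apply IH.
Qed.

Lemma zlsum_inj (h : forall b b', f b = f b' -> posc b m -> posc (comp k b b') m)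
  (H : forall b b' eb y y', h b b' eb y = h b b' eb y' -> y = y') :
  forall l l' el x x', zlsum k Fm Fm h l l' el x = zlsum k Fm Fm h l l' el x' -> x = x'.
Proof.
  induction l as [|b r IH]; intros [|b' r'] el x x' Hx; try cn el; [destruct x|].
  destruct x' as [y'|y']; destruct x as [y|y]; simpl in Hx; try discriminate; injection Hx as Hx; f_equal; eauto.
Qed.
Lemma zlsump_inj (h : forall b b', f b = f b' -> posc b' m -> posc (comp k b b') m)
  (H : forall b b' eb y y', h b b' eb y = h b b' eb y' -> y = y') :
  forall l l' el x x', zlsump k Fm Fm h l l' el x = zlsump k Fm Fm h l l' el x' -> x = x'.
Proof.
  induction l as [|b r IH]; intros [|b' r'] el x x' Hx; try cn el; [destruct x|].
  destruct x' as [y'|y']; destruct x as [y|y]; simpl in Hx; try discriminate; injection Hx as Hx; f_equal; eauto.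
Qed.

Lemma zlsum_meet (h1 : forall b b', f b = f b' -> posc b m -> posc (comp k b b') m)
  (h2 : forall b b', f b = f b' -> posc b' m -> posc (comp k b b') m)
  (T1 S1 : forall b, posc (f b) m -> posc b m)
  (H : forall b b' eb eb' x y, h1 b b' eb x = h2 b b' eb y -> exists a, x = T1 b a /\ y = S1 b' (pos_cast eb' m a)) :
  forall l l' (E : Node (map f l) = Node (map f l')) el x y,
  zlsum k Fm Fm h1 l l' el x = zlsump k Fm Fm h2 l l' el y ->
  exists a : lsum Fm (map f l), x = lsum_of_map f T1 l a /\ y = lsum_of_map f S1 l' (pos_cast E (S m) a).
Proof.
  induction l as [|b r IH]; intros [|b' r'] E el x y Hxy; try cnE E.
  - destruct x.
  - assert (e1 : f b = f b') by (injection E; intros; congruence).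
    tails E r r'.
    destruct x as [x|x]; destruct y as [y|y]; simpl in Hxy; try discriminate; injection Hxy as Hxy.
    + destruct (H _ _ _ e1 _ _ Hxy) as [a [-> ->]]. exists (inl a).
      rewrite (cast_S_inl _ _ _ _ E e1). split; reflexivity.
    + destruct (IH _ e2 _ _ _ Hxy) as [a [-> ->]]. exists (inr a).
      rewrite (cast_S_inr _ _ _ _ E e2). split; reflexivity.
Qed.

Lemma zlsum_cover (h1 : forall b b', f b = f b' -> posc b m -> posc (comp k b b') m)
  (h2 : forall b b', f b = f b' -> posc b' m -> posc (comp k b b') m)
  (H : forall b b' eb p, (exists x, h1 b b' eb x = p) \/ (exists y, h2 b b' eb y = p)) :
  forall l l' el (p : lsum Fm (zipc k l l')),
  (exists x, zlsum k Fm Fm h1 l l' el x = p) \/ (exists y, zlsump k Fm Fm h2 l l' el y = p).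
Proof.
  induction l as [|b r IH]; intros [|b' r'] el p; try destruct p.
  - destruct (H b b' (f_equal (hd (Node [])) el) p) as [[x Hx]|[y Hy]].
    + left. exists (inl x). simpl. f_equal. exact Hx.
    + right. exists (inl y). simpl. f_equal. exact Hy.
  - destruct (IH r' (f_equal (@tl tree) el) l) as [[x Hx]|[y Hy]].
    + left. exists (inr x). simpl. f_equal. exact Hx.
    + right. exists (inr y). simpl. f_equal. exact Hy.
Qed.
End WithM.

Lemma zvert_inj l : forall l' (el : map f l = map f l') x x', zvert k l l' x = zvert k l l' x' -> x = x'.
Proof.
  induction l as [|b r IH]; intros [|b' r'] el x x' Hx; try cn el.
  - destruct x, x'. reflexivity.
  - destruct x as [[]|y]; destruct x' as [[]|y']; simpl in Hx; try discriminate; try reflexivity.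
    injection Hx as Hx. f_equal. eapply IH; [exact (f_equal (@tl tree) el)|exact Hx].
Qed.
Lemma zvertp_inj l : forall l' (el : map f l = map f l') x x', zvertp k l l' x = zvertp k l l' x' -> x = x'.
Proof.
  induction l as [|b r IH]; intros [|b' r'] el x x' Hx; try cn el.
  - destruct x, x'. reflexivity.
  - destruct x as [[]|y]; destruct x' as [[]|y']; simpl in Hx; try discriminate; try reflexivity.
    injection Hx as Hx. f_equal. eapply IH; [exact (f_equal (@tl tree) el)|exact Hx].
Qed.
Lemma zvert_meet l : forall l' (E : Node (map f l) = Node (map f l')) x y,
  zvert k l l' x = zvertp k l l' y ->
  exists a : vert (map f l), x = vert_of_map f l a /\ y = vert_of_map f l' (pos_cast E 0 a).
Proof.
  induction l as [|b r IH]; intros [|b' r'] E x y Hxy; try cnE E.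
  - exists tt. split; apply unit_all.
  - tails E r r'.
    destruct x as [[]|x]; destruct y as [[]|y]; simpl in Hxy; try discriminate.
    + exists (inl tt). rewrite cast_0_inl. split; reflexivity.
    + injection Hxy as Hxy. destruct (IH _ e2 _ _ Hxy) as [a [-> ->]]. exists (inr a).
      rewrite (cast_0_inr _ _ _ _ E e2). split; reflexivity.
Qed.
Lemma zvert_cover l : forall l' (p : vert (zipc k l l')), exists x, zvert k l l' x = p.
Proof.
  induction l as [|b r IH]; intros [|b' r'] p.
  - exists tt. destruct p. reflexivity.
  - exists tt. destruct p. reflexivity.
  - exists (inl tt). destruct p. reflexivity.
  - destruct p as [[]|p].
    + exists (inl tt). reflexivity.
    + destruct (IH r' p) as [x Hx]. exists (inr x). simpl. congruence.
Qed.
End Lists.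

Section Zero.
Context {F : tree -> Type}.
Lemma vapp_comm l l' : vapp_l l l' (vlast l) = vapp_r l l' (vfirst l').
Proof. induction l as [|b r IH]; simpl; [reflexivity|congruence]. Qed.
Lemma vapp_l_inj l l' x x' : vapp_l l l' x = vapp_l l l' x' -> x = x'.
Proof.
  induction l as [|b r IH]; intros Hx; [apply unit_all|].
  destruct x as [[]|y]; destruct x' as [[]|y']; simpl in Hx; try discriminate; try reflexivity.
  injection Hx as Hx. f_equal. auto.
Qed.
Lemma vapp_r_inj l l' x x' : vapp_r l l' x = vapp_r l l' x' -> x = x'.
Proof. induction l as [|b r IH]; intros Hx; [exact Hx|]. injection Hx as Hx. auto. Qed.
Lemma vapp_meet l l' x y : vapp_l l l' x = vapp_r l l' y -> x = vlast l /\ y = vfirst l'.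
Proof.
  induction l as [|b r IH]; intros Hx.
  - split; [apply unit_all|]. simpl in Hx. congruence.
  - destruct x as [[]|x]; simpl in Hx; try discriminate. injection Hx as Hx.
    destruct (IH _ Hx) as [-> ->]. split; reflexivity.
Qed.
Lemma vapp_cover l l' (p : vert (l ++ l')) : (exists x, vapp_l l l' x = p) \/ (exists y, vapp_r l l' y = p).
Proof.
  induction l as [|b r IH].
  - right. exists p. reflexivity.
  - destruct p as [[]|p].
    + left. exists (inl tt). reflexivity.
    + destruct (IH p) as [[x Hx]|[y Hy]]; [left; exists (inr x)|right; exists y]; simpl; congruence.
Qed.
Lemma lapp_l_inj l l' (x x' : lsum F l) : lapp_l l l' x = lapp_l l l' x' -> x = x'.
Proof.
  induction l as [|b r IH]; intros Hx; [destruct x|].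
  destruct x as [y|y]; destruct x' as [y'|y']; simpl in Hx; try discriminate;
  injection Hx as Hx; f_equal; auto.
Qed.
Lemma lapp_r_inj l l' (x x' : lsum F l') : lapp_r l l' x = lapp_r l l' x' -> x = x'.
Proof. induction l as [|b r IH]; intros Hx; [exact Hx|]. injection Hx as Hx. auto. Qed.
Lemma lapp_meet l l' (x : lsum F l) y : lapp_l l l' x = lapp_r l l' y -> False.
Proof.
  induction l as [|b r IH]; intros Hx; [destruct x|].
  destruct x as [x|x]; simpl in Hx; try discriminate. injection Hx as Hx. eauto.
Qed.
Lemma lapp_cover l l' (p : lsum F (l ++ l')) : (exists x, lapp_l l l' x = p) \/ (exists y, lapp_r l l' y = p).
Proof.
  induction l as [|b r IH].
  - right. exists p. reflexivity.
  - destruct p as [p|p].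
    + left. exists (inl p). reflexivity.
    + destruct (IH p) as [[x Hx]|[y Hy]]; [left; exists (inr x)|right; exists y]; simpl; congruence.
Qed.
End Zero.

Lemma P1 k : forall B B' (e : bd k B = bd k B') n a,
  incm k B B' e n (cotgt k B n a) = incp k B B' e n (cosrc k B' n (pos_cast e n a)).
Proof.
  induction k as [|k IH]; intros [l] [l'] e [|n] a.
  - exact (vapp_comm l l').
  - destruct a.
  - exact (P1_0 k l l' e a).
  - refine (P1_S k n _ _ _ _ _ l l' e (f_equal nodes e) a).
    intros b b' eb eb' a0. rewrite (proof_irrelevance _ eb' eb). apply IH.
Qed.

Lemma P2m k : forall B B' (e : bd k B = bd k B') n x x', incm k B B' e n x = incm k B B' e n x' -> x = x'.
Proof.
  induction k as [|k IH]; intros [l] [l'] e [|n] x x'.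
  - apply vapp_l_inj.
  - apply lapp_l_inj.
  - exact (zvert_inj k l l' (f_equal nodes e) x x').
  - refine (zlsum_inj k n _ _ l l' (f_equal nodes e) x x'). intros b b' eb; apply IH.
Qed.
Lemma P2p k : forall B B' (e : bd k B = bd k B') n x x', incp k B B' e n x = incp k B B' e n x' -> x = x'.
Proof.
  induction k as [|k IH]; intros [l] [l'] e [|n] x x'.
  - apply vapp_r_inj.
  - apply lapp_r_inj.
  - exact (zvertp_inj k l l' (f_equal nodes e) x x').
  - refine (zlsump_inj k n _ _ l l' (f_equal nodes e) x x'). intros b b' eb; apply IH.
Qed.

Lemma P3 k : forall B B' (e : bd k B = bd k B') n x y, incm k B B' e n x = incp k B B' e n y ->
  exists a, x = cotgt k B n a /\ y = cosrc k B' n (pos_cast e n a).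
Proof.
  induction k as [|k IH]; intros [l] [l'] e [|n] x y Hxy.
  - destruct (vapp_meet l l' x y Hxy) as [-> ->]. exists tt. split; reflexivity.
  - destruct (lapp_meet l l' x y Hxy).
  - exact (zvert_meet k l l' e x y Hxy).
  - refine (zlsum_meet k n _ _ _ _ _ l l' e (f_equal nodes e) x y Hxy).
    intros b b' eb eb' x0 y0 H0. rewrite (proof_irrelevance _ eb' eb). exact (IH b b' eb n x0 y0 H0).
Qed.

Lemma P4 k : forall B B' (e : bd k B = bd k B') n p,
  (exists x, incm k B B' e n x = p) \/ (exists y, incp k B B' e n y = p).
Proof.
  induction k as [|k IH]; intros [l] [l'] e [|n] p.
  - exact (vapp_cover l l' p).
  - exact (lapp_cover l l' p).
  - left. exact (zvert_cover k l l' p).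
  - refine (zlsum_cover k n _ _ _ l l' (f_equal nodes e) p). intros b b' eb; apply IH.
Qed.

Theorem proposition2p8 (k : nat) (B B' : tree) (e : bd k B = bd k B') :
  exists (inc_m : ghom (Pos B) (Pos (comp k B B')))
         (inc_p : ghom (Pos B') (Pos (comp k B B'))),
    is_pushout (cotgt k B) (fun n x => cosrc k B' n (pos_cast e n x)) inc_m inc_p.
Proof.
  exists (GHom (Pos B) (Pos (comp k B B')) (incm k B B' e) (incm_src k B B' e) (incm_tgt k B B' e)).
  exists (GHom (Pos B') (Pos (comp k B B')) (incp k B B' e) (incp_src k B B' e) (incp_tgt k B B' e)).
  apply pushout_crit; simpl.
  - apply P1.
  - apply P2m.
  - apply P2p.
  - apply P3.
  - apply P4.
Qed.
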